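(* Let $M$ be a total dtla. If $M$ is equivalent to a dtop (i.e., $[\![M]\!]=[\![N]\!]$ for some dtop $N$), then $\mathrm{diff}(M)$ is finite.
   Context: Trees and patterns. $T_\Delta(Z)$ is the set of trees over ranked alphabet $\Delta$ with extra nullary symbols $Z$; $t/v$ is the subtree at node $v\in\mathbb N_+^*$; $\bot$ is a special nullary symbol; $V_\bot(t)$ is the set of nodes labelled $\bot$. $\sqcap\{t,t'\}$ denotes the largest common prefix of $t$ and $t'$ (greatest lower bound w.r.t. the order in which $\bot$ may be replaced by trees), having $\bot$ at the highest nodes where $t,t'$ disagree. A $\Sigma$-context is $C\in T_\Sigma(\{\bot\})$ with exactly one occurrence of $\bot$; $\mathcal C_\Sigma$ is their set. Dtlas. A dtla $M$ from $\Sigma$ to $\Delta$ consists of a finite set $Q$ of states, a total deterministic bottom-up tree automaton with finite state set $P$ and transitions $\delta(a,p_1,\dots,p_k)$, extended to $\delta_M:T_\Sigma\to P$, an axiom $A_M(p)\in T_\Delta(Q(\{x_0\}))$ for each $p\in P$, and at most one rule $q(a(x_1\langle p_1\rangle,\dots,x_k\langle p_k\rangle))\to\mathrm{rhs}_M(q,a,p_1,\dots,p_k)\in T_\Delta(Q(X_k))$ per $q,a,p_1,\dots,p_k$. Semantics: $q_M(a(s_1,\dots,s_k))=\mathrm{rhs}_M(q,a,\delta_M(s_1),\dots,\delta_M(s_k))[q'(x_i)\leftarrow q'_M(s_i)]$, $M(s)=A_M(\delta_M(s))[q(x_0)\leftarrow q_M(s)]$, defining the translation $[\![M]\!]$; $M$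 is total if $[\![M]\!]$ is total. A dtop is a dtla with one look-ahead state. For $C\in\mathcal C_\Sigma$, $p\in P$, $M(C[p])\in T_\Delta(Q\times P)$ is the output on $C$ with the hole treated as a leaf with look-ahead state $p$ and $q_M(p)=\langle q,p\rangle$. Difference trees: $\mathrm{diff}(M)=\{M(C[p])/v\mid C\in\mathcal C_\Sigma,\ p,p'\in P,\ v\in V_\bot(M(C[p])\sqcap M(C[p']))\}$. *)

(* Defs.v *)
From mathcomp Require Import all_boot.
From Stdlib Require List.
Set Implicit Arguments. Unset Strict Implicit. Unset Printing Implicit Defensive.

(* separate predicate.  Children are indexed from 0 in node addresses. *)
Inductive tree (L : Type) : Type := Node of L & seq (tree L).
Arguments Node {L} _ _.

Fixpoint tmap (L L' : Type) (f : L -> L') (t : tree L) : tree L' :=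
  let: Node l ts := t in Node (f l) (map (tmap f) ts).

Fixpoint wfT (L : Type) (rk : L -> nat) (t : tree L) : bool :=
  let: Node l ts := t in (size ts == rk l) && all (wfT rk) ts.

Fixpoint labels (L : Type) (t : tree L) : seq L :=
  let: Node l ts := t in l :: flatten (map (@labels L) ts).

Definition sumrank (L Z : Type) (rk : L -> nat) (x : L + Z) : nat :=
  match x with inl l => rk l | inr _ => 0 end.

(* subtree t/v at node v (a path of 0-based child indices) *)
Fixpoint subtree (L : Type) (t : tree L) (v : seq nat) : option (tree L) :=
  match v with
  | [::] => Some t
  | i :: v' => let: Node _ ts := t in
               match drop i ts with
               | t' :: _ => subtree t' v'
               | [::] => None
               end
  end.

(* greatest lower bound  t ⊓ t' ; the label None plays the role of ⊥ *)
Fixpoint meet (L : eqType) (t1 t2 : tree L) {struct t1} : tree (option L) :=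
  let: Node l1 ts1 := t1 in
  let: Node l2 ts2 := t2 in
  if (l1 == l2) && (size ts1 == size ts2) then
    Node (Some l1)
      ((fix go (a b : seq (tree L)) : seq (tree (option L)) :=
          match a, b with
          | x :: a', y :: b' => meet x y :: go a' b'
          | _, _ => [::]
          end) ts1 ts2)
  else Node None [::].

Definition is_bot_node (L : Type) (t : tree (option L)) (v : seq nat) : bool :=
  if subtree t v is Some (Node None _) then true else false.

Fixpoint osequence (A : Type) (s : seq (option A)) : option (seq A) :=
  match s with
  | [::] => Some [::]
  | o :: s' => match o, osequence s' with
               | Some a, Some r => Some (a :: r)
               | _, _ => None
               end
  end.

Fixpoint tsubst (D A B : Type) (f : A -> option (tree (D + B)))
    (t : tree (D + A)) : option (tree (D + B)) :=
  let: Node l ts := t in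
  match l with
  | inl d => match osequence (map (tsubst f) ts) with
             | Some ts' => Some (Node (inl d) ts')
             | None => None
             end
  | inr a => f a
  end.

(* Deterministic top-down tree transducers with regular look-ahead.   *)
(* - axiom A_M(p) ∈ T_Δ(Q({x0})): tree over Δ + Q (leaf inr q = q(x0)) *)
(* - rhs_M(q,a,p1..pk) ∈ T_Δ(Q(X_k)): tree over Δ + Q*nat, where the  *)
(*   leaf inr (q,i) stands for q(x_i), 1 <= i <= k = rank a;           *)
(*   None means there is no rule.                                     *)
(* - delta: transitions of the total deterministic bottom-up look-ahead *)
(*   automaton (only used on argument lists of length rank a).         *)
Record dtla (Sigma Delta : finType) (rkS : Sigma -> nat) (rkD : Delta -> nat) :=
  Dtla {
    stQ : finType;
    stP : finType;
    delta : Sigma -> seq stP -> stP;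
    axm : stP -> tree (Delta + stQ);
    rhs : stQ -> Sigma -> seq stP -> option (tree (Delta + (stQ * nat)));
    axm_wf : forall p, wfT (sumrank rkD) (axm p);
    rhs_wf : forall q a ps r, size ps = rkS a -> rhs q a ps = Some r ->
      wfT (sumrank rkD) r &&
      all (fun x => if x is inr (_, i) then (0 < i <= rkS a) else true) (labels r)
  }.

Section Semantics.
Variables (Sigma Delta : finType) (rkS : Sigma -> nat) (rkD : Delta -> nat).
Variable M : dtla rkS rkD.

(* Input trees over Σ + X: a leaf inr x has look-ahead state (look x)  *)
(* and, for each state q, output (hq q x).                              *)
Variables (X Z : Type) (look : X -> stP M) (hq : stQ M -> X -> tree (Delta + Z)).

Fixpoint lstate (t : tree (Sigma + X)) : stP M :=
  let: Node l ts := t in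
  match l with
  | inl a => @delta _ _ _ _ M a (map lstate ts)
  | inr x => look x
  end.

Fixpoint qrun (q : stQ M) (t : tree (Sigma + X)) {struct t}
    : option (tree (Delta + Z)) :=
  let: Node l ts := t in
  match l with
  | inr x => Some (hq q x)
  | inl a =>
      let res := map (fun t' q' => qrun q' t') ts in
      match @rhs _ _ _ _ M q a (map lstate ts) with
      | None => None
      | Some r =>
          tsubst (fun qi : stQ M * nat =>
                    nth (fun _ => None) res qi.2.-1 qi.1) r
      end
  end.

Definition run (t : tree (Sigma + X)) : option (tree (Delta + Z)) :=
  tsubst (fun q => qrun q t) (@axm _ _ _ _ M (lstate t)).

End Semantics.

Section Translation.
Variables (Sigma Delta : finType) (rkS : Sigma -> nat) (rkD : Delta -> nat).

(* ground input trees T_Σ are trees over Σ (well-ranked w.r.t. rkS);  *)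
(* ground output trees T_Δ are represented as trees over Δ + void.    *)
Definition ground_in (s : tree Sigma) : tree (Sigma + void) := tmap inl s.

Definition gstate (M : dtla rkS rkD) (s : tree Sigma) : stP M :=
  lstate (M := M) (X := void) (of_void _) (ground_in s).

Definition transl (M : dtla rkS rkD) (s : tree Sigma) : option (tree (Delta + void)) :=
  run (M := M) (X := void) (Z := void) (of_void _) (fun _ => of_void _) (ground_in s).

Definition total_dtla (M : dtla rkS rkD) : Prop :=
  forall s, wfT rkS s -> transl M s <> None.

Definition equivalent (M N : dtla rkS rkD) : Prop :=
  forall s, wfT rkS s -> transl M s = transl N s.

Definition is_dtop (N : dtla rkS rkD) : Prop := #|stP N| = 1.

Definition la_reachable (M : dtla rkS rkD) : Prop :=
  forall p : stP M, exists s, wfT rkS s /\ gstate M s = p.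

(* Σ-contexts: trees over Σ + {⊥} (⊥ = inr tt) with exactly one ⊥ *)
Definition is_context (C : tree (Sigma + unit)) : bool :=
  wfT (sumrank rkS) C && (count (fun x => if x is inr _ then true else false)
                                (labels C) == 1).

(* M(C[p]) ∈ T_Δ(Q × P) *)
Definition ctx_out (M : dtla rkS rkD) (C : tree (Sigma + unit)) (p : stP M)
    : option (tree (Delta + (stQ M * stP M))) :=
  run (M := M) (X := unit) (Z := stQ M * stP M) (fun _ => p)
      (fun q _ => Node (inr (q, p)) [::]) C.

Definition diff (M : dtla rkS rkD) (t : tree (Delta + (stQ M * stP M))) : Prop :=
  exists C p p' t1 t2 v,
    [/\ is_context C, ctx_out C p = Some t1, ctx_out C p' = Some t2,
        is_bot_node (meet t1 t2) v & subtree t1 v = Some t].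

Definition finite_set (A : Type) (S : A -> Prop) : Prop :=
  exists l : seq A, forall a, S a -> List.In a l.

End Translation.

(* Main.v *)
Require Import Defs.
From mathcomp Require Import all_boot.
From Stdlib Require List.
Set Implicit Arguments. Unset Strict Implicit. Unset Printing Implicit Defensive.


Section Gen.

Lemma tree_ind' (L : Type) (P : tree L -> Prop) :
  (forall l ts, List.Forall P ts -> P (Node l ts)) -> forall t, P t.
Proof.
move=> H; fix F 1 => -[l ts]; apply: H.
elim: ts => [|t ts IH]; [exact: List.Forall_nil | exact: List.Forall_cons (F t) IH].
Qed.

Definition obind (A B : Type) (f : A -> option B) (o : option A) :=
  if o is Some x then f x else None.

Lemma osequence_F2 (T U : Type) (h : T -> option U) ts ts' :
  osequence (map h ts) = Some ts' -> List.Forall2 (fun t t' => h t = Some t') ts ts'.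
Proof.
elim: ts ts' => [|t ts IH] ts' /=; first by case=> <-.
case E: (h t) => [a|] //; case E2: (osequence (map h ts)) => [r|] // [<-].
by constructor; [|apply: IH].
Qed.

Lemma osequence_comp (T U V : Type) (H : T -> option U) (G : U -> option V) ts :
  obind (fun xs => osequence (map G xs)) (osequence (map H ts)) =
  osequence (map (fun t => obind G (H t)) ts).
Proof.
elim: ts => [|t ts IH] //=.
case: (H t) => [a|] //=; move: IH.
case: (osequence (map H ts)) => [r|] /= <-.
- by [].
- by case: (G a).
Qed.

Lemma map_ext_F (T U : Type) (f g : T -> U) ts :
  List.Forall (fun t => f t = g t) ts -> map f ts = map g ts.
Proof. by elim=> //= x l E _ ->; rewrite E. Qed.

Variables (D : Type).

Lemma tsubst_ext (A B : Type) (f f' : A -> option (tree (D + B))) t :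
  (forall a, f a = f' a) -> tsubst f t = tsubst f' t.
Proof.
move=> E; elim/tree_ind': t => [[d|a] ts IH] /=; last exact: E.
rewrite (map_ext_F IH); by [].
Qed.

Lemma tsubst_assoc (A B C : Type) (h : A -> option (tree (D + B)))
  (g : B -> option (tree (D + C))) r :
  obind (tsubst g) (tsubst h r) = tsubst (fun a => obind (tsubst g) (h a)) r.
Proof.
elim/tree_ind': r => [[d|a] ts IH] //=.
rewrite -(map_ext_F IH) -osequence_comp.
by case: (osequence (map (tsubst h) ts)) => [r|] //=.
Qed.

Lemma all_In (T : Type) (p : pred T) s : all p s = true <-> (forall x, List.In x s -> p x).
Proof.
elim: s => [|y s IH] /=; first by split.
split.
- by move/andP=> [py /IH H] x [<-|/H].
- move=> H; rewrite H /=; [apply/IH => x Hx; apply: H; right | left]; done.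
Qed.

Lemma drop_In (T : Type) (s : seq T) i x r : drop i s = x :: r -> List.In x s.
Proof.
elim: s i => [|y s IH] [|i] //=; first by case=> ->; left.
by move/IH; right.
Qed.

Lemma F2_drop (T U : Type) (R : T -> U -> Prop) xs ys i x r :
  List.Forall2 R xs ys -> drop i xs = x :: r -> exists y r', drop i ys = y :: r' /\ R x y.
Proof.
move=> F; elim: F i => [|a b xs' ys' Rab F IH] [|i] //=.
- by case=> <- _; exists b, ys'.
- exact: IH.
Qed.

Lemma F2_drop' (T U : Type) (R : T -> U -> Prop) xs ys i y r :
  List.Forall2 R xs ys -> drop i ys = y :: r -> exists x r', drop i xs = x :: r' /\ R x y.
Proof.
move=> F; elim: F i => [|a b xs' ys' Rab F IH] [|i] //=.
- by case=> <- _; exists a, xs'.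
- exact: IH.
Qed.

Lemma F2_size (T U : Type) (R : T -> U -> Prop) xs ys : List.Forall2 R xs ys -> size xs = size ys.
Proof. by elim=> //= a b xs' ys' _ _ ->. Qed.

Definition wfS (B : Type) (rk : D -> nat) (t : tree (D + B)) := wfT (sumrank rk) t.

Lemma tsubst_wf (A B : Type) (rk : D -> nat) (f : A -> option (tree (D + B))) t w :
  wfT (sumrank rk) t -> (forall a u, f a = Some u -> wfT (sumrank rk) u) ->
  tsubst f t = Some w -> wfT (sumrank rk) w.
Proof.
move=> + Hf; elim/tree_ind': t w => [[d|a] ts IH] w /=; last by move=> _ /Hf.
move=> /andP[/eqP Hs /all_In Hall].
case E: (osequence (map (tsubst f) ts)) => [ts'|] // [<-] /=.
have F := osequence_F2 E.
apply/andP; split; first by rewrite -(F2_size F) Hs.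
apply/all_In => x Hx.
have {F}: List.Forall2 (fun t t' => wfT (sumrank rk) t -> wfT (sumrank rk) t') ts ts'.
  elim: F IH {Hs E Hall} => [|a b xs ys Hab F IHF] Hl; constructor.
  - by inversion Hl; subst; move=> Hw; apply: (H1 _ Hw Hab).
  - by inversion Hl; subst; apply: IHF.
move=> F2.
elim: F2 Hx Hall => [|a b xs ys Hab F IHF] //= [<-|Hx] Hall.
- by apply: Hab; apply: Hall; left.
- by apply: IHF => // y Hy; apply: Hall; right.
Qed.

Fixpoint hgt (B : Type) (t : tree (D + B)) : nat :=
  let: Node l ts := t in
  match l with inl _ => (foldr maxn 0 (map (@hgt B) ts)).+1 | inr _ => 0 end.

Lemma foldr_F2 (T U : Type) (F : T -> nat) (G : U -> nat) K xs ys :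
  List.Forall2 (fun x y => F x <= G y + K) xs ys ->
  foldr maxn 0 (map F xs) <= foldr maxn 0 (map G ys) + K.
Proof.
elim=> //= a b xs' ys' H _ IH.
rewrite geq_max; apply/andP; split.
- by apply: leq_trans H _; rewrite leq_add2r leq_maxl.
- by apply: leq_trans IH _; rewrite leq_add2r leq_maxr.
Qed.

Lemma hgt_tsubst_ge (A B : Type) (f : A -> option (tree (D + B))) t w :
  tsubst f t = Some w -> hgt t <= hgt w.
Proof.
elim/tree_ind': t w => [[d|a] ts IH] w //=.
case E: (osequence (map (tsubst f) ts)) => [ts'|] // [<-] /=.
rewrite ltnS -[X in _ <= X]addn0; apply: foldr_F2.
move: (osequence_F2 E) IH; elim=> [|x y xs ys Hxy F IHF] Hl; constructor.
- by inversion Hl; subst; rewrite addn0; apply: H1.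
- by inversion Hl; subst; apply: IHF.
Qed.

Lemma hgt_tsubst_le (A B : Type) (f : A -> option (tree (D + B))) K t w :
  (forall a u, f a = Some u -> hgt u <= K) ->
  tsubst f t = Some w -> hgt w <= hgt t + K.
Proof.
move=> Hf; elim/tree_ind': t w => [[d|a] ts IH] w /=; last by move/Hf.
case E: (osequence (map (tsubst f) ts)) => [ts'|] // [<-] /=.
rewrite addSn ltnS; apply: foldr_F2.
move: (osequence_F2 E) IH; elim=> [|x y xs ys Hxy F IHF] Hl; constructor.
- by inversion Hl; subst; apply: H1.
- by inversion Hl; subst; apply: IHF.
Qed.

Lemma In_foldr (T : Type) (F : T -> nat) x s : List.In x s -> F x <= foldr maxn 0 (map F s).
Proof.
elim: s => [|y s IH] //= [->|/IH H]; first exact: leq_maxl.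
exact: leq_trans H (leq_maxr _ _).
Qed.

Lemma subtree_wf (B : Type) (rk : D -> nat) (t : tree (D + B)) v u :
  wfT (sumrank rk) t -> subtree t v = Some u -> wfT (sumrank rk) u /\ hgt u <= hgt t.
Proof.
elim: v t => [|i v IH] [l ts] /=; first by move=> ? [<-].
move=> /andP[/eqP Hs /all_In Hall].
case E: (drop i ts) => [|x r] // Hsub.
have Hx := drop_In E.
have [Hw Hh] := IH _ (Hall _ Hx) Hsub.
split=> //.
case: l Hs => [d|a] /= Hs.
- apply: leq_trans Hh _; apply: leq_trans (In_foldr (@hgt B) Hx) _; exact: leqnSn.
- by move: Hx; rewrite (size0nil Hs).
Qed.

Lemma subtree_tsubst_fwd (A B : Type) (rk : D -> nat) (g : A -> option (tree (D + B))) t v T W :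
  wfT (sumrank rk) t -> subtree t v = Some T -> tsubst g t = Some W ->
  exists X, subtree W v = Some X /\ tsubst g T = Some X.
Proof.
elim: v t W => [|i v IH] [l ts] W /=; first by move=> _ [<-] H; exists W.
move=> /andP[/eqP Hs /all_In Hall].
case E: (drop i ts) => [|x r] // Hsub.
case: l Hs => [d|a] /= Hs; last by move: E; rewrite (size0nil Hs); case: i.
case E2: (osequence (map (tsubst g) ts)) => [ts'|] // [<-] /=.
have [y [r' [-> Hxy]]] := F2_drop (osequence_F2 E2) E.
exact: IH _ _ (Hall _ (drop_In E)) Hsub Hxy.
Qed.

Lemma subtree_tsubst_bwd (A B : Type) (f : A -> option (tree (D + B))) Y v W X :
  tsubst f Y = Some W -> subtree W v = Some X ->
  (exists d ys, subtree Y v = Some (Node (inl d) ys) /\ tsubst f (Node (inl d) ys) = Some X)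
  \/ (exists a Fa w, f a = Some Fa /\ subtree Fa w = Some X).
Proof.
elim: v Y W => [|i v IH] [[d|a] ys] W /=.
- move=> HW [<-]; left; exists d, ys; split=> //.
- by move=> HW HX; right; exists a, W, [::].
- case E2: (osequence (map (tsubst f) ys)) => [ts'|] // [<-] /=.
  case E: (drop i ts') => [|x r] // Hsub.
  have [y [r' [Ey Hxy]]] := F2_drop' (osequence_F2 E2) E.
  rewrite Ey; exact: IH _ _ Hxy Hsub.
- by move=> HW HX; right; exists a, W, (i :: v).
Qed.

Lemma tsubst_inl (A B : Type) (f : A -> option (tree (D + B))) d ys X :
  tsubst f (Node (inl d) ys) = Some X -> exists xs, X = Node (inl d) xs /\ size xs = size ys.
Proof.
rewrite /=; case E: (osequence _) => [xs|] // [<-]; exists xs; split=> //.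
by rewrite (F2_size (osequence_F2 E)).
Qed.

End Gen.
Section Meet.
Variable L : eqType.

Fixpoint mgo (a b : seq (tree L)) : seq (tree (option L)) :=
  match a, b with
  | x :: a', y :: b' => meet x y :: mgo a' b'
  | _, _ => [::]
  end.

Lemma meet_eq (l1 l2 : L) ts1 ts2 : meet (Node l1 ts1) (Node l2 ts2) =
  if (l1 == l2) && (size ts1 == size ts2) then Node (Some l1) (mgo ts1 ts2)
  else Node None [::].
Proof. by []. Qed.

Lemma mgo_drop a b i t r : drop i (mgo a b) = t :: r ->
  exists x y ra rb, drop i a = x :: ra /\ drop i b = y :: rb /\ t = meet x y.
Proof.
elim: a b i => [|x a IH] [|y b] [|i] //=.
- by case=> <- _; exists x, y, a, b.
- exact: IH.
Qed.

Lemma meet_bot (t1 t2 : tree L) v : is_bot_node (meet t1 t2) v ->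
  exists l1 ts1 l2 ts2, subtree t1 v = Some (Node l1 ts1) /\
    subtree t2 v = Some (Node l2 ts2) /\ ~~ ((l1 == l2) && (size ts1 == size ts2)).
Proof.
rewrite /is_bot_node.
elim: v t1 t2 => [|i v IH] [l1 ts1] [l2 ts2]; rewrite meet_eq.
- case: ifP => H //= _; exists l1, ts1, l2, ts2; by rewrite H.
- case: ifP => H /=; last by case: i.
  case E: (drop i (mgo ts1 ts2)) => [|t r] //.
  have [x [y [ra [rb [-> [-> ->]]]]]] := mgo_drop E.
  exact: IH.
Qed.
End Meet.

Section Enum.
Variables (Delta Z : finType) (rkD : Delta -> nat).

Fixpoint tlists (T : Type) (k : nat) (l : list T) : list (list T) :=
  match k with
  | 0 => [:: [::]]
  | k'.+1 => List.flat_map (fun x => List.map (cons x) (tlists k' l)) l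
  end.

Lemma tlists_in (T : Type) (l : list T) ts :
  (forall x, List.In x ts -> List.In x l) -> List.In ts (tlists (size ts) l).
Proof.
elim: ts => [|x ts IH] H /=; first by left.
apply/List.in_flat_map; exists x; split; first by apply: H; left.
apply: List.in_map; apply: IH => y Hy; apply: H; by right.
Qed.

Lemma In_enum (T : finType) (x : T) : List.In x (enum T).
Proof.
have : x \in enum T by rewrite mem_enum.
elim: (enum T) => [|y s IH] //; rewrite in_cons => /orP[/eqP ->|/IH]; [left|right] => //.
Qed.

Fixpoint tenum (n : nat) : list (tree (Delta + Z)) :=
  List.map (fun z => Node (inr z) [::]) (enum Z) ++
  match n with
  | 0 => [::]
  | n'.+1 => List.flat_map (fun d => List.map (Node (inl d)) (tlists (rkD d) (tenum n'))) (enum Delta)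
  end.

Lemma tenum_eq n : tenum n = List.map (fun z => Node (inr z) [::]) (enum Z) ++
  match n with
  | 0 => [::]
  | n'.+1 => List.flat_map (fun d => List.map (Node (inl d)) (tlists (rkD d) (tenum n'))) (enum Delta)
  end.
Proof. by case: n. Qed.

Lemma tenum_in (t : tree (Delta + Z)) n :
  wfT (sumrank rkD) t -> hgt t <= n -> List.In t (tenum n).
Proof.
elim/tree_ind': t n => [[d|z] ts IH] n /= /andP[/eqP Hs /all_In Hall] Hh.
- case: n Hh => [|n] // Hh.
  rewrite tenum_eq; apply: List.in_or_app; right.
  apply/List.in_flat_map; exists d; split; first exact: In_enum.
  apply: List.in_map; rewrite -Hs; apply: tlists_in => x Hx.
  move: IH; rewrite List.Forall_forall => IH.
  apply: IH => //; first exact: Hall.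
  by apply: leq_trans (In_foldr (@hgt _ _) Hx) _.
- rewrite (size0nil Hs) tenum_eq; apply: List.in_or_app; left.
  apply: List.in_map; exact: In_enum.
Qed.
End Enum.
Section Dtla.
Variables (Sigma Delta : finType) (rkS : Sigma -> nat) (rkD : Delta -> nat).
Implicit Type M : dtla rkS rkD.

Fixpoint plug (C : tree (Sigma + unit)) (s : tree Sigma) : tree Sigma :=
  let: Node l ts := C in
  match l with inl a => Node a (map (fun c => plug c s) ts) | inr _ => s end.

Definition gq M (s : tree Sigma) (q : stQ M) :=
  qrun (M := M) (X := void) (Z := void) (of_void _) (fun _ => of_void _) q (ground_in s).

Definition cq M (p : stP M) (q : stQ M) (C : tree (Sigma + unit)) :=
  qrun (M := M) (X := unit) (Z := stQ M * stP M) (fun _ => p)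
      (fun q _ => Node (inr (q, p)) [::]) q C.

Lemma lstate_plug M C s p : gstate M s = p ->
  lstate (M := M) (X := void) (of_void _) (ground_in (plug C s)) =
  lstate (M := M) (X := unit) (fun _ => p) C.
Proof.
move=> Hp; elim/tree_ind': C => [[a|u] ts IH] /=; last exact: Hp.
congr (delta _ _); rewrite -!map_comp; exact: map_ext_F IH.
Qed.

Lemma nth_res M (G : tree (Sigma + unit) -> tree (Sigma + void)) (g : stQ M * stP M -> option (tree (Delta + void))) p ts :
  List.Forall (fun c => forall q, qrun (M := M) (X := void) (Z := void) (of_void _) (fun _ => of_void _) q (G c) =
                     obind (tsubst g) (cq p q c)) ts ->
  forall i q, nth (fun _ => None) (map (fun t' q' => qrun (M := M) (X := void) (Z := void) (of_void _) (fun _ => of_void _) q' t') (map G ts)) i q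
   = obind (tsubst g) (nth (fun _ => None) (map (fun t' q' => cq p q' t') ts) i q).
Proof.
elim=> [|c ts' Hc _ IH] [|i] q //=.
Qed.

Lemma qrun_plug M C s p q : gstate M s = p ->
  qrun (M := M) (X := void) (Z := void) (of_void _) (fun _ => of_void _) q (ground_in (plug C s)) =
  obind (tsubst (fun qp : stQ M * stP M => gq (M:=M) s qp.1)) (cq p q C).
Proof.
move=> Hp; elim/tree_ind': C q => [[a|u] ts IH] q /=; last by [].
rewrite (_ : map (lstate _) _ = map (lstate (fun _ => p)) ts); last first.
  rewrite -!map_comp; apply: map_ext_F.
  by apply/List.Forall_forall => c _ /=; exact: (lstate_plug c Hp).
rewrite /cq /=.
case: (rhs _ _ _) => [r|] //=.
rewrite tsubst_assoc; apply: tsubst_ext => qi.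
rewrite -[map (tmap inl) _]map_comp.
exact: (@nth_res M (fun c => ground_in (plug c s)) (fun qp => gq (M:=M) s qp.1) p ts IH qi.2.-1 qi.1).
Qed.
End Dtla.
Section Dtla2.
Variables (Sigma Delta : finType) (rkS : Sigma -> nat) (rkD : Delta -> nat).
Implicit Type M : dtla rkS rkD.

Lemma transl_plug M C s p : gstate M s = p ->
  transl M (plug C s) = obind (tsubst (fun qp : stQ M * stP M => gq (M:=M) s qp.1)) (ctx_out C p).
Proof.
move=> Hp; rewrite /transl /run /ctx_out (lstate_plug C Hp) tsubst_assoc.
apply: tsubst_ext => q; exact: qrun_plug.
Qed.

Lemma wf_ground (s : tree Sigma) : wfT rkS s -> wfT (sumrank rkS) (ground_in s).
Proof.
elim/tree_ind': s => a ts IH /= /andP[Hs /all_In Hall].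
rewrite size_map Hs /=; apply/all_In => x /List.in_map_iff [y [<- Hy]].
by move: IH; rewrite List.Forall_forall => IH; apply: IH => //; apply: Hall.
Qed.

Lemma wf_plug C s : wfT (sumrank rkS) C -> wfT rkS s -> wfT rkS (plug C s).
Proof.
move=> + Hs; elim/tree_ind': C => [[a|u] ts IH] /= /andP[Hsz /all_In Hall] //.
rewrite size_map Hsz /=; apply/all_In => x /List.in_map_iff [y [<- Hy]].
by move: IH; rewrite List.Forall_forall => IH; apply: IH => //; apply: Hall.
Qed.

Lemma nth_some (T U : Type) (F : T -> U -> option (tree (Delta + void))) ts i q u :
  nth (fun _ => None) (map F ts) i q = Some u -> exists t, List.In t ts /\ F t q = Some u.
Proof.
elim: ts i => [|t ts IH] [|i] //= H; first by exists t; split=> //; left.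
by have [t' [Ht' E]] := IH _ H; exists t'; split=> //; right.
Qed.

Lemma nth_some' (T U V : Type) (F : T -> U -> option V) ts i q u :
  nth (fun _ => None) (map F ts) i q = Some u -> exists t, List.In t ts /\ F t q = Some u.
Proof.
elim: ts i => [|t ts IH] [|i] //= H; first by exists t; split=> //; left.
by have [t' [Ht' E]] := IH _ H; exists t'; split=> //; right.
Qed.

Lemma qrun_wf M (X Z : Type) (look : X -> stP M) (hq : stQ M -> X -> tree (Delta + Z)) q t u :
  wfT (sumrank rkS) t -> (forall q x, wfT (sumrank rkD) (hq q x)) ->
  qrun look hq q t = Some u -> wfT (sumrank rkD) u.
Proof.
move=> + Hhq; elim/tree_ind': t q u => [[a|x] ts IH] q u /=; last by move=> _ [<-].
move=> /andP[/eqP Hsz /all_In Hall].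
case E: (rhs _ _ _) => [r|] // Hr.
have Hsz2 : size (map (lstate look) ts) = rkS a by rewrite size_map.
have /andP[Hrw _] := rhs_wf Hsz2 E.
apply: (tsubst_wf Hrw _ Hr) => qi w Hn; have [t [Ht Hq]] := nth_some' Hn.
move: IH; rewrite List.Forall_forall => IH.
exact: IH _ Ht _ _ (Hall _ Ht) Hq.
Qed.

Lemma run_wf M (X Z : Type) (look : X -> stP M) (hq : stQ M -> X -> tree (Delta + Z)) t u :
  wfT (sumrank rkS) t -> (forall q x, wfT (sumrank rkD) (hq q x)) ->
  run look hq t = Some u -> wfT (sumrank rkD) u.
Proof.
move=> Ht Hhq; apply: tsubst_wf; first exact: axm_wf.
by move=> q w; apply: qrun_wf.
Qed.

End Dtla2.
From Stdlib Require Import IndefiniteDescription.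

Definition oh (D B : Type) (o : option (tree (D + B))) := if o is Some t then hgt t else 0.

Theorem mainTheorem6 (Sigma Delta : finType) (rkS : Sigma -> nat) (rkD : Delta -> nat)
    (M : dtla rkS rkD) :
  la_reachable M -> total_dtla M ->
  (exists N : dtla rkS rkD, is_dtop N /\ equivalent M N) ->
  finite_set (@diff _ _ _ _ M).
Proof.
move=> Hreach Htot [N [HN Heq]].
pose wit p := proj1_sig (constructive_indefinite_description _ (Hreach p)).
have Hwit p : wfT rkS (wit p) /\ gstate M (wit p) = p.
  exact: proj2_sig (constructive_indefinite_description _ (Hreach p)).
pose KM := \max_(q : stQ M) \max_(p : stP M) oh (gq (M:=M) (wit p) q).
pose KN := \max_(r : stQ N) \max_(p : stP M) oh (gq (M:=N) (wit p) r).
have HKM q p u : gq (M:=M) (wit p) q = Some u -> hgt u <= KM.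
  move=> E; apply: leq_trans (leq_bigmax q); apply: leq_trans (leq_bigmax p); by rewrite E.
have HKN r p u : gq (M:=N) (wit p) r = Some u -> hgt u <= KN.
  move=> E; apply: leq_trans (leq_bigmax r); apply: leq_trans (leq_bigmax p); by rewrite E.
have Nuniq (x y : stP N) : x = y.
  have : #|stP N| <= 1 by rewrite HN.
  by move/card_le1_eqP => H; apply: H.
have gqwf (K : dtla rkS rkD) p r u : gq (M:=K) (wit p) r = Some u -> wfT (sumrank rkD) u.
  rewrite /gq => E.
  apply: (qrun_wf _ _ E); [exact: wf_ground (proj1 (Hwit p)) | by move=> ? []].
exists (@tenum _ _ rkD (KM + KN)).
move=> T [C [p [p' [t1 [t2 [v [HC H1 H2 Hbot HT]]]]]]].
have HCwf : wfT (sumrank rkS) C by case/andP: HC.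
have [l1 [ts1 [l2 [ts2 [E1 [E2 Hne]]]]]] := meet_bot Hbot.
have ctxwf (K : dtla rkS rkD) (C' : tree (Sigma + unit)) (q : stP K) u :
    wfT (sumrank rkS) C' -> ctx_out C' q = Some u -> wfT (sumrank rkD) u.
  by move=> Hw E; apply: (run_wf Hw _ E).
have t1wf := ctxwf _ _ _ _ HCwf H1.
have t2wf := ctxwf _ _ _ _ HCwf H2.
have [Twf _] := subtree_wf t1wf HT.
apply: tenum_in => //.
have [Hs1 Hp1] := Hwit p.
have [Hs2 Hp2] := Hwit p'.
have HW1 := transl_plug C Hp1.
have HW2 := transl_plug C Hp2.
rewrite H1 /= in HW1; rewrite H2 /= in HW2.
have Hpl1 := wf_plug HCwf Hs1.
have Hpl2 := wf_plug HCwf Hs2.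
case EW1: (tsubst _ t1) HW1 => [W1|] HW1; last by case: (Htot _ Hpl1).
case EW2: (tsubst _ t2) HW2 => [W2|] HW2; last by case: (Htot _ Hpl2).
have HN1 := transl_plug (M:=N) C (erefl (gstate N (wit p))).
have HN2 := transl_plug (M:=N) C (erefl (gstate N (wit p'))).
rewrite (Nuniq (gstate N (wit p')) (gstate N (wit p))) in HN2.
rewrite -Heq // HW1 in HN1; rewrite -Heq // HW2 in HN2.
case EY: (ctx_out C (gstate N (wit p))) HN1 HN2 => [Y|] //= HY1 HY2.
have Ywf := ctxwf _ _ _ _ HCwf EY.
have [X1 [HX1 HTX1]] := subtree_tsubst_fwd t1wf HT EW1.
have hT := hgt_tsubst_ge HTX1.
have [[d [ys [HYv HYX1]]] | [a [Fa [w [HFa HFw]]]]] := subtree_tsubst_bwd (esym HY1) HX1.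
- have [X2' [HX2' HYX2]] := subtree_tsubst_fwd Ywf HYv (esym HY2).
  have [X2 [HX2 HTX2]] := subtree_tsubst_fwd t2wf E2 EW2.
  rewrite HX2 in HX2'; case: HX2' => HX2e; subst X2'.
  rewrite HT in E1; case: E1 => ET; subst T.
  have [xs1 [EX1 Sx1]] := tsubst_inl HYX1.
  have [xs2 [EX2 Sx2]] := tsubst_inl HYX2.
  clear HT Twf; case: l1 HTX1 Hne hT => [e1|z1] HTX1 Hne hT; last by [].
  have [xs1' [EX1' Sx1']] := tsubst_inl HTX1.
  rewrite EX1 in EX1'; case: EX1' => Ee1 Exs1; subst e1 xs1'.
  clear E2; case: l2 HTX2 Hne => [e2|z2] HTX2 Hne.
  + have [xs2' [EX2' Sx2']] := tsubst_inl HTX2.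
    rewrite EX2 in EX2'; case: EX2' => Ee2 Exs2; subst e2 xs2'.
    by move: Hne; rewrite eqxx -Sx1' -Sx2' Sx1 Sx2 eqxx.
  + have hX2 : hgt X2 <= KM by apply: (HKM z2.1 p'); exact: HTX2.
    have hY := hgt_tsubst_ge HYX2.
    have hX1 : hgt X1 <= hgt (Node (inl d) ys) + KN.
      apply: (hgt_tsubst_le _ HYX1) => a u Ha; exact: (HKN a.1 p).
    apply: leq_trans hT _; apply: leq_trans hX1 _; rewrite leq_add2r.
    exact: leq_trans hY hX2.
- have [_ h2] := subtree_wf (gqwf _ _ _ _ HFa) HFw.
  have h3 := HKN _ _ _ HFa.
  apply: leq_trans hT _; apply: leq_trans h2 _; apply: leq_trans h3 _; exact: leq_addl.
Qed.
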